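(* Let $n\equiv 1\pmod 4$. Then the set $$\{h,\ x_n,x_{n-1},\ldots,x_{\frac{n+7}2},x_{\frac{n+5}2},\ x_{\frac{n+3}2}x_{\frac{n-1}2}\cdots x_6x_4,\ x_{\frac{n+1}2}x_{\frac{n-3}2}\cdots x_5x_3\}$$ is a generating set of $\mathcal{AM}_n$ of minimum size. In particular, $\mathcal{AM}_n$ has rank $\frac{n+1}2+1$.
   Context: Let $\Omega_n=\{1<2<\cdots<n\}$ and $\mathcal{I}_n$ the monoid of all partial injective maps of $\Omega_n$, written on the right and composed left to right. $\mathcal{AI}_n$ is the set of all $\alpha\in\mathcal{I}_n$ with $\alpha=\sigma|_{\mathrm{Dom}(\alpha)}$ for some even permutation $\sigma$; $\mathcal{PMI}_n$ is the set of monotone (order-preserving or order-reversing) elements and $\mathcal{AM}_n=\mathcal{AI}_n\cap\mathcal{PMI}_n$. The rank of a monoid is the minimum size of a generating set. $h$ is the permutation $i\mapsto n+1-i$. Let $X_i=\Omega_n\setminus\{i\}$. Define $x_1,\dots,x_n$ as the (unique) order-preserving partial permutations with: $x_1$: domain $X_1$, image $X_n$ if $n$ is odd and $X_{n-1}$ if $n$ is even; $x_2$: domain $X_2$, image $X_{n-1}$ if $n$ is odd and $X_n$ if $n$ is even; $x_i$ ($3\leqslant i\leqslant n$): domain $X_i$, image $X_{i-2}$. The products $x_{\frac{n+3}2}x_{\frac{n-1}2}\cdots x_4$ and $x_{\frac{n+1}2}x_{\frac{n-3}2}\cdots x_3$ have indices decreasing by $2$. *)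

(* Defs.v *)
From mathcomp Require Import all_boot all_fingroup.
Set Implicit Arguments. Unset Strict Implicit. Unset Printing Implicit Defensive.

(* Omega_n = {1 < ... < n} is represented by 'I_n : point p (1-based) is the
   ordinal p-1.  A partial map of Omega_n is a finite function
   'I_n -> option 'I_n (None = undefined). *)
Definition pfun (n : nat) := {ffun 'I_n -> option 'I_n}.

Definition is_pinj n (f : pfun n) : Prop :=
  forall k l a, f k = Some a -> f l = Some a -> k = l.

(* composition written on the right, left to right: x (f g) = (x f) g *)
Definition pcomp n (f g : pfun n) : pfun n := [ffun k => obind g (f k)].
Definition pid n : pfun n := [ffun k => Some k].

Definition pprod n (s : seq (pfun n)) : pfun n := foldr (@pcomp n) (pid n) s.

Definition in_AI n (f : pfun n) : Prop :=
  is_pinj f /\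
  exists s : {perm 'I_n}, ~~ odd_perm s /\ forall k a, f k = Some a -> a = s k.

Definition order_preserving n (f : pfun n) : Prop :=
  forall x y a b, f x = Some a -> f y = Some b -> x <= y -> a <= b.
Definition order_reversing n (f : pfun n) : Prop :=
  forall x y a b, f x = Some a -> f y = Some b -> x <= y -> b <= a.
Definition in_PMI n (f : pfun n) : Prop :=
  is_pinj f /\ (order_preserving f \/ order_reversing f).

Definition in_AM n (f : pfun n) : Prop := in_AI f /\ in_PMI f.

Definition generates n (A : {set pfun n}) (M : pfun n -> Prop) : Prop :=
  forall f, M f <-> exists2 s : seq (pfun n), all (mem A) s & f = pprod s.

Definition has_rank n (M : pfun n -> Prop) (r : nat) : Prop :=
  (exists A : {set pfun n}, #|A| = r /\ generates A M) /\
  (forall A : {set pfun n}, generates A M -> r <= #|A|).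

Definition hmap n : pfun n := [ffun k => Some (rev_ord k)].

(* the unique order-preserving partial permutation with domain
   Omega_n \ {i} and image Omega_n \ {j} (i, j 1-based):
   the point k (0-based) /= i-1 is sent to bump (j-1) (unbump (i-1) k). *)
Definition opmap n (i j : nat) : pfun n :=
  [ffun k : 'I_n => if val k == i.-1 then None
                    else insub (bump j.-1 (unbump i.-1 k))].

(* x_1, ..., x_n as in the paper (1-based index i) *)
Definition xgen n (i : nat) : pfun n :=
  if i == 1 then opmap n 1 (if odd n then n else n.-1)
  else if i == 2 then opmap n 2 (if odd n then n.-1 else n)
  else opmap n i (i - 2).

(* x_{(n+3)/2} x_{(n-1)/2} ... x_6 x_4  (indices decreasing by 2) *)
Definition prod_even n : pfun n :=
  pprod [seq xgen n ((n + 3)./2 - 2 * k) | k <- iota 0 (((n + 3)./2 - 4)./2).+1].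
(* x_{(n+1)/2} x_{(n-3)/2} ... x_5 x_3 *)
Definition prod_odd n : pfun n :=
  pprod [seq xgen n ((n + 1)./2 - 2 * k) | k <- iota 0 (((n + 1)./2 - 3)./2).+1].

Definition gen_set n : {set pfun n} :=
  [set:: hmap n :: [seq xgen n i | i <- rev (iota (n + 5)./2 (n - (n + 5)./2).+1)]
         ++ [:: prod_even n; prod_odd n]].

(* Main.v *)
Require Import Defs.
From mathcomp Require Import all_boot all_fingroup zify.
Set Implicit Arguments. Unset Strict Implicit. Unset Printing Implicit Defensive.
Local Notation pcomp := Defs.pcomp.
Local Notation pprod := Defs.pprod.

Ltac vnat := repeat match goal with
 | |- context [@isSub.val_subdef ?a ?b ?c ?d ?u] => change (@isSub.val_subdef a b c d u) with (nat_of_ord u)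
 | H : context [@isSub.val_subdef ?a ?b ?c ?d ?u] |- _ => change (@isSub.val_subdef a b c d u) with (nat_of_ord u) in H
 end.

Section Basics.
Variable n : nat.
Implicit Types f g k : pfun n.
Implicit Type A : {set pfun n}.

Lemma pfunP' f g : (forall x, omap val (f x) = omap val (g x)) -> f = g.
Proof.
move=> H; apply/ffunP => x; move: (H x).
case: (f x) => [y|]; case: (g x) => [z|] //= [] /val_inj -> //.
Qed.

Lemma pcompE f g x : pcomp f g x = obind g (f x).
Proof. by rewrite /Defs.pcomp ffunE. Qed.

Lemma pcompA f g k : pcomp (pcomp f g) k = pcomp f (pcomp g k).
Proof.
apply/ffunP => x; rewrite !pcompE; case: (f x) => //= y; by rewrite pcompE.
Qed.

Lemma pcomp1f f : pcomp (pid n) f = f.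
Proof. by apply/ffunP => x; rewrite pcompE /pid ffunE. Qed.

Lemma pcompf1 f : pcomp f (pid n) = f.
Proof. apply/ffunP => x; rewrite pcompE; case: (f x) => //= y; by rewrite /pid ffunE. Qed.

Lemma pprod_cat (s1 s2 : seq (pfun n)) : pprod (s1 ++ s2) = pcomp (pprod s1) (pprod s2).
Proof. elim: s1 => [|a s IH] /=; first by rewrite pcomp1f. by rewrite IH pcompA. Qed.

Definition inG (A : {set pfun n}) f := exists2 s, all (mem A) s & f = pprod s.

Lemma inG_id A : inG A (pid n).
Proof. by exists [::]. Qed.

Lemma inG_gen A f : f \in A -> inG A f.
Proof. move=> H; exists [:: f]; rewrite /= ?H //; by rewrite pcompf1. Qed.

Lemma inG_comp A f g : inG A f -> inG A g -> inG A (pcomp f g).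
Proof.
move=> [s1 H1 ->] [s2 H2 ->]; exists (s1 ++ s2); first by rewrite all_cat H1 H2.
by rewrite pprod_cat.
Qed.

(* elementary codim-1 order-preserving maps, 0-based gaps *)
Definition E a b : pfun n := opmap n a.+1 b.+1.

Lemma EvalE a b x : a < n -> b < n ->
  omap val (E a b x) = if val x == a then None else Some (bump b (unbump a x)).
Proof.
move=> ha hb; rewrite /E /opmap ffunE /=.
case: eqP => // hx; case: insubP => [y _ hy /=|]; first by congr Some; exact: hy.
move/negP; case; have := ltn_ord x; move/eqP: hx; rewrite /bump /unbump; lia.
Qed.

Lemma E_none a b x : val x = a -> E a b x = None.
Proof. by move=> hx; rewrite /E /opmap ffunE /= hx eqxx. Qed.

Lemma E_some a b x : a < n -> b < n -> val x != a ->
  {y : 'I_n | E a b x = Some y & (y : nat) = bump b (unbump a x)}.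
Proof.
move=> ha hb hx; have := EvalE x ha hb; rewrite (negbTE hx).
case: (E a b x) => // y [<-]; by exists y.
Qed.

Lemma EE a b c : a < n -> b < n -> c < n -> pcomp (E a b) (E b c) = E a c.
Proof.
move=> ha hb hc; apply: pfunP' => x; rewrite pcompE (EvalE x ha hc).
case: (eqVneq (val x) a) => hx.
  by rewrite E_none.
case: (E_some ha hb hx) => y -> hy /=.
rewrite (EvalE y hb hc) hy; case: eqP => [hE|_]; first by move: hE; change (\val y) with (nat_of_ord y); rewrite hy /bump /unbump; lia.
by rewrite bumpK.
Qed.

Lemma Eaa a x : a < n -> omap val (E a a x) = if val x == a then None else Some (val x).
Proof.
move=> ha; rewrite (EvalE x ha ha); case: eqP => // hx.
by rewrite unbumpK //= inE; apply/eqP.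
Qed.

Lemma hmapE x : hmap n x = Some (rev_ord x).
Proof. by rewrite /Defs.pcomp ffunE. Qed.

Lemma hh : pcomp (hmap n) (hmap n) = pid n.
Proof. apply/ffunP => x; rewrite pcompE !ffunE /=; by rewrite ffunE rev_ordK. Qed.

Lemma hEh a b : a < n -> b < n ->
  pcomp (pcomp (hmap n) (E a b)) (hmap n) = E (n.-1 - a) (n.-1 - b).
Proof.
move=> ha hb; have ha' : n.-1 - a < n by lia.
have hb' : n.-1 - b < n by lia.
apply: pfunP' => x; rewrite !pcompE hmapE /= (EvalE x ha' hb').
case: (eqVneq (val (rev_ord x)) a) => hx.
  rewrite E_none //=; move: hx; rewrite /=; case: eqP => //; have := ltn_ord x; lia.
case: (E_some ha hb hx) => y -> hy /=; rewrite hmapE /= hy.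
have := ltn_ord x; move: hx => /=; case: eqP => // hE _ hxn; case: eqP => hx2; first by exfalso; lia.
congr Some; rewrite /bump /unbump; lia.
Qed.


Lemma tpermVal (x y z : 'I_n) :
  val (tperm x y z) = if val z == val x then val y else if val z == val y then val x else val z.
Proof.
case: tpermP => [->|->|hx hy]; rewrite ?eqxx //.
  by case: eqP => // /val_inj ->.
by rewrite (introF eqP (fun e => hx (val_inj e))) (introF eqP (fun e => hy (val_inj e))).
Qed.

Lemma pinj_comp f g : is_pinj f -> is_pinj g -> is_pinj (pcomp f g).
Proof.
move=> Hf Hg k l a; rewrite !pcompE.
case Ek: (f k) => [u|] //=; case El: (f l) => [v|] //= gu gv.
have uv := Hg _ _ _ gu gv; subst v; exact: Hf _ _ _ Ek El.
Qed.

Lemma AI_comp f g : in_AI f -> in_AI g -> in_AI (pcomp f g).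
Proof.
move=> [If [s [es Hs]]] [Ig [t [et Ht]]]; split; first exact: pinj_comp.
exists (s * t)%g; rewrite odd_permM (negbTE es) (negbTE et); split => // k a.
rewrite pcompE permM; case Ek: (f k) => [u|] //= gu.
by rewrite (Ht _ _ gu) (Hs _ _ Ek).
Qed.

Lemma PMI_comp f g : in_PMI f -> in_PMI g -> in_PMI (pcomp f g).
Proof.
move=> [If Of] [Ig Og]; split; first exact: pinj_comp.
have key : forall x y a b, pcomp f g x = Some a -> pcomp f g y = Some b ->
   exists u v, [/\ f x = Some u, f y = Some v, g u = Some a & g v = Some b].
  move=> x y a b; rewrite !pcompE; case: (f x) => [u|] //=; case: (f y) => [v|] //= h1 h2.
  by exists u, v.
case: Of => Hf; case: Og => Hg.
- left=> x y a b H1 H2 xy; have [u [v [? ? ? ?]]] := key _ _ _ _ H1 H2; eauto.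
- right=> x y a b H1 H2 xy; have [u [v [? ? ? ?]]] := key _ _ _ _ H1 H2; eauto.
- right=> x y a b H1 H2 xy; have [u [v [? ? ? ?]]] := key _ _ _ _ H1 H2.
  apply: (Hg v u); eauto.
- left=> x y a b H1 H2 xy; have [u [v [? ? ? ?]]] := key _ _ _ _ H1 H2.
  apply: (Hg v u); eauto.
Qed.

Lemma AM_comp f g : in_AM f -> in_AM g -> in_AM (pcomp f g).
Proof. move=> [A1 P1] [A2 P2]; split; [exact: AI_comp | exact: PMI_comp]. Qed.

Lemma AM_pid : in_AM (pid n).
Proof.
split; split.
- by move=> k l a; rewrite /pid !ffunE => -[<-] [<-].
- by exists 1%g; rewrite odd_perm1; split => // k a; rewrite /pid ffunE perm1 => -[<-].
- by move=> k l a; rewrite /pid !ffunE => -[<-] [<-].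
- by left=> x y a b; rewrite /pid !ffunE => -[<-] [<-].
Qed.

Lemma AM_pprod (s : seq (pfun n)) : (forall f, f \in s -> in_AM f) -> in_AM (pprod s).
Proof.
elim: s => [|a s IH] H /=; first exact: AM_pid.
apply: AM_comp; first by apply: H; rewrite inE eqxx.
by apply: IH => f fs; apply: H; rewrite inE fs orbT.
Qed.

Lemma E_pinj a b : a < n -> b < n -> is_pinj (E a b).
Proof.
move=> ha hb x y u hx hy; apply: val_inj.
have := EvalE x ha hb; have := EvalE y ha hb; rewrite hx hy /=.
case: eqP => // h1; case: eqP => // h2 [e1] [e2].
move: e1 e2 h1 h2; vnat; rewrite /bump /unbump; lia.
Qed.

Lemma E_op a b : a < n -> b < n -> order_preserving (E a b).
Proof.
move=> ha hb x y u v hx hy hxy.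
have := EvalE x ha hb; have := EvalE y ha hb; rewrite hx hy /=.
case: eqP => // _; case: eqP => // _ [e1] [e2].
move: e1 e2 hxy; change (\val u) with (nat_of_ord u); change (\val v) with (nat_of_ord v).
rewrite /bump /unbump; lia.
Qed.

Lemma E_PMI a b : a < n -> b < n -> in_PMI (E a b).
Proof. move=> ha hb; split; [exact: E_pinj | left; exact: E_op]. Qed.

Lemma E_down_AM b : b.+2 < n -> in_AM (E b.+2 b).
Proof.
move=> hb; have hb0 : b < n by lia. have hb1 : b.+1 < n by lia.
split; last by apply: E_PMI.
split; first by apply: E_pinj.
pose o0 := Ordinal hb0; pose o1 := Ordinal hb1; pose o2 := Ordinal hb.
exists (tperm o0 o1 * tperm o0 o2)%g; rewrite odd_permM !odd_tperm.
rewrite -!val_eqE /=; split.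
  have e1 : (b != b.+1) by rewrite neq_ltn ltnSn.
  have e2 : (b != b.+2) by rewrite neq_ltn ltnS leqnSn.
  by rewrite e1 e2.
move=> k u hk; apply: val_inj; rewrite permM !tpermVal /=.
have := EvalE k hb hb0; rewrite hk /=; case: eqP => // hk2 [e].
vnat; rewrite e; move: hk2; have := ltn_ord k.
repeat (case: eqP => /=); rewrite /bump /unbump; lia.
Qed.

Definition rho j (x : 'I_n) : 'I_n := if (j <= x) && (x <= n.-1 - j) then rev_ord x else x.

Lemma rhoK j : involutive (rho j).
Proof.
move=> x; have hx := ltn_ord x.
case H1: ((j <= x) && (x <= n.-1 - j)).
  have e : rho j x = rev_ord x by rewrite /rho H1.
  rewrite e /rho.
  have -> : (j <= rev_ord x) && (rev_ord x <= n.-1 - j).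
    by move: H1 => /andP[]; rewrite /=; lia.
  by rewrite rev_ordK.
by rewrite /rho !H1.
Qed.

Definition rperm j : {perm 'I_n} := perm (can_inj (rhoK j)).

Lemma rpermE j x : rperm j x = rho j x.
Proof. by rewrite permE. Qed.

Lemma rperm_mid j : n.-1 - j <= j -> rperm j = 1%g.
Proof.
move=> hk; apply/permP => x; rewrite rpermE perm1 /rho.
case: ifP => // /andP[h1 h2]; apply: val_inj => /=; have := ltn_ord x; lia.
Qed.

Lemma rhoVal j (x : 'I_n) : val (rho j x) = if (j <= x) && (x <= n.-1 - j) then n - x.+1 else x.
Proof. by rewrite /rho; case: ifP. Qed.

Lemma rperm_step j (h1 : j < n) (h2 : n.-1 - j < n) : j < n.-1 - j ->
  rperm j = (tperm (Ordinal h1) (Ordinal h2) * rperm j.+1)%g.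
Proof.
move=> hj; apply/permP => x; rewrite permM !rpermE; apply: val_inj.
rewrite !rhoVal tpermVal /=; have := ltn_ord x.
repeat (case: eqP => /=); repeat case: ifP; lia.
Qed.

Lemma rperm_odd m : n = (4 * m).+1 -> forall i, i <= 2 * m -> odd_perm (rperm (2 * m - i)) = odd i.
Proof.
move=> hn; elim=> [|i IH] hi.
  by rewrite subn0 rperm_mid ?odd_perm1 //; lia.
have h1 : 2 * m - i.+1 < n by lia.
have h2 : n.-1 - (2 * m - i.+1) < n by lia.
rewrite (rperm_step h1 h2); last by lia.
have -> : (2 * m - i.+1).+1 = 2 * m - i by lia.
rewrite odd_permM IH; last by lia.
rewrite odd_tperm -val_eqE /=.
have -> : (2 * m - i.+1 != n.-1 - (2 * m - i.+1)) = true by apply/eqP; lia.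
by case: (odd i).
Qed.

Lemma h_AM : n %% 4 = 1 -> in_AM (hmap n).
Proof.
move=> h4; have hn : n = (4 * (n %/ 4)).+1 by rewrite {1}(divn_eq n 4) h4; lia.
split; split.
- move=> k l a; rewrite !hmapE => -[<-] [e]; apply: val_inj; have := ltn_ord k; have := ltn_ord l; move: e; vnat; lia.
- exists (rperm 0); split.
    by have := @rperm_odd _ hn (2 * (n %/ 4)) (leqnn _); rewrite subnn oddM /= => ->.
  move=> k a; rewrite hmapE => -[<-]; apply: val_inj; rewrite rpermE rhoVal /=.
  by have := ltn_ord k; case: ifP => //; lia.
- move=> k l a; rewrite !hmapE => -[<-] [e]; apply: val_inj; have := ltn_ord k; have := ltn_ord l; move: e; vnat; lia.
- right=> x y a b; rewrite !hmapE => -[<-] [<-] /=; have := ltn_ord y; lia.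
Qed.


Lemma xgenE i : 3 <= i -> xgen n i = E i.-1 (i - 3).
Proof.
move=> hi; rewrite /xgen /E.
have -> : (i == 1) = false by apply/eqP; lia.
have -> : (i == 2) = false by apply/eqP; lia.
have -> : i.-1.+1 = i by lia.
by have -> : (i - 3).+1 = i - 2 by lia.
Qed.

Lemma xgen_AM i : 3 <= i <= n -> in_AM (xgen n i).
Proof.
move=> /andP[h1 h2]; rewrite xgenE //.
have -> : i.-1 = (i - 3).+2 by lia.
apply: E_down_AM; lia.
Qed.

Lemma chainE j s : 2 * j + 3 <= s -> s <= n ->
  pprod [seq xgen n (s - 2 * i0) | i0 <- iota 0 j.+1] = E s.-1 (s - 2 * j - 3).
Proof.
elim: j s => [|j IH] s h1 h2.
  by rewrite /= pcompf1 subn0 xgenE //; congr E; lia.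
rewrite -[j.+2]addn1 iotaD add0n map_cat pprod_cat IH; try lia.
rewrite /= pcompf1 xgenE; last by lia.
have -> : (s - 2 * j.+1).-1 = s - 2 * j - 3 by lia.
rewrite EE //; lia.
Qed.

End Basics.

Section Gen.
Variables n m : nat.
Hypothesis hn : n = (4 * m).+1.
Hypothesis hm : 0 < m.
Local Notation A := (gen_set n).
Local Notation G := (inG A).

Lemma half_lem x y : x = y.*2 -> x./2 = y.
Proof. by move=> ->; rewrite doubleK. Qed.

Lemma n5 : (n + 5)./2 = 2 * m + 3. Proof. apply: half_lem; rewrite hn -!muln2; lia. Qed.
Lemma n3 : (n + 3)./2 = 2 * m + 2. Proof. apply: half_lem; rewrite hn -!muln2; lia. Qed.
Lemma n1 : (n + 1)./2 = 2 * m + 1. Proof. apply: half_lem; rewrite hn -!muln2; lia. Qed.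
Lemma j_even : ((n + 3)./2 - 4)./2 = m - 1.
Proof. rewrite n3; apply: half_lem; rewrite -!muln2; lia. Qed.
Lemma j_odd : ((n + 1)./2 - 3)./2 = m - 1.
Proof. rewrite n1; apply: half_lem; rewrite -!muln2; lia. Qed.

Lemma gen_setE f : (f \in A) =
  (f \in hmap n :: [seq xgen n i | i <- rev (iota (n + 5)./2 (n - (n + 5)./2).+1)]
         ++ [:: prod_even n; prod_odd n]).
Proof. by rewrite /gen_set inE. Qed.

Lemma prod_evenE : prod_even n = E n (2 * m).+1 1.
Proof. rewrite /prod_even j_even n3 chainE; try lia. f_equal; lia. Qed.

Lemma prod_oddE : prod_odd n = E n (2 * m) 0.
Proof. rewrite /prod_odd j_odd n1 chainE; try lia. f_equal; lia. Qed.

Lemma G_h : G (hmap n).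
Proof. by apply: inG_gen; rewrite gen_setE inE eqxx. Qed.

Lemma G_pe : G (E n (2 * m).+1 1).
Proof. by apply: inG_gen; rewrite -prod_evenE gen_setE !(inE, mem_cat) eqxx !orbT. Qed.

Lemma G_po : G (E n (2 * m) 0).
Proof. by apply: inG_gen; rewrite -prod_oddE gen_setE !(inE, mem_cat) eqxx !orbT. Qed.

Lemma G_x g : 2 * m + 2 <= g <= 4 * m -> G (E n g (g - 2)).
Proof.
move=> /andP[h1 h2]; apply: inG_gen.
have -> : E n g (g - 2) = xgen n g.+1 by rewrite xgenE //; f_equal; lia.
rewrite gen_setE inE mem_cat; apply/orP; right; apply/orP; left.
apply: map_f; rewrite mem_rev mem_iota n5; lia.
Qed.


Lemma G_conj a b : a < n -> b < n -> G (E n a b) -> G (E n (4 * m - a) (4 * m - b)).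
Proof.
move=> ha hb H; have -> : 4 * m = n.-1 by lia.
rewrite -hEh //; apply: inG_comp; last exact: G_h.
by apply: inG_comp; [exact: G_h|].
Qed.

Definition Rs a b := a = b \/ G (E n a b).

Lemma G_trans a b c : a < n -> b < n -> c < n -> G (E n a b) -> G (E n b c) -> G (E n a c).
Proof. move=> ha hb hc h1 h2; rewrite -(EE ha hb hc); exact: inG_comp. Qed.

Lemma G_Rs_l a b c : a < n -> b < n -> c < n -> Rs a b -> G (E n b c) -> G (E n a c).
Proof. move=> ha hb hc [->//|h1]; exact: G_trans. Qed.

Lemma G_Rs_r a b c : a < n -> b < n -> c < n -> G (E n a b) -> Rs b c -> G (E n a c).
Proof. move=> ha hb hc h1 [<-//|h2]; exact: (G_trans ha hb hc). Qed.

Lemma par a b : a <= b -> odd a = odd b -> exists k, b = a + 2 * k.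
Proof.
move=> hab hp; exists (b - a)./2.
have := odd_double_half (b - a); rewrite oddB // hp addbb /= -muln2; lia.
Qed.

Lemma ups k a : a + 2 * k <= 2 * m -> Rs a (a + 2 * k).
Proof.
elim: k => [|k IH] h; first by left; lia.
right; have h' : a + 2 * k <= 2 * m by lia.
have hs : G (E n (a + 2 * k) (a + 2 * k.+1)).
  have := G_conj _ _ (G_x (g := 4 * m - (a + 2 * k)) _); rewrite hn.
  have -> : 4 * m - (4 * m - (a + 2 * k)) = a + 2 * k by lia.
  have -> : 4 * m - (4 * m - (a + 2 * k) - 2) = a + 2 * k.+1 by lia.
  move=> H; apply: H; lia.
apply: (G_Rs_l _ _ _ (IH h') hs); lia.
Qed.

Lemma downs k b : 2 * m <= b -> b + 2 * k <= 4 * m -> Rs (b + 2 * k) b.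
Proof.
elim: k => [|k IH] h1 h2; first by left; lia.
right; have hs : G (E n (b + 2 * k.+1) (b + 2 * k)).
  have := G_x (g := b + 2 * k.+1); have -> : b + 2 * k.+1 - 2 = b + 2 * k by lia.
  move=> H; apply: H; lia.
apply: (G_Rs_r _ _ _ hs (IH h1 _)); lia.
Qed.

Lemma ups2 a b : a <= b <= 2 * m -> odd a = odd b -> Rs a b.
Proof. move=> /andP[h1 h2] hp; have [k e] := par h1 hp; rewrite e; apply: ups; lia. Qed.

Lemma downs2 a b : 2 * m <= b -> b <= a <= 4 * m -> odd a = odd b -> Rs a b.
Proof.
move=> h0 /andP[h1 h2] hp; have [k e] := par h1 (esym hp); rewrite e.
apply: downs; lia.
Qed.

Lemma EG a b : a < n -> b < n -> odd a = odd b -> G (E n a b).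
Proof.
move=> ha hb hp.
have G1 : G (E n (2 * m - 1) (4 * m - 1)).
  have := G_conj _ _ G_pe; have -> : 4 * m - (2 * m).+1 = 2 * m - 1 by lia.
  apply; lia.
have G2 : G (E n (2 * m) (4 * m)).
  have := G_conj _ _ G_po; have -> : 4 * m - 2 * m = 2 * m by lia.
  rewrite subn0; apply; lia.
case Ha: (odd a).
-
  have R1 : Rs a (2 * m).+1.
    case: (leqP (2 * m).+1 a) => h.
      apply: downs2; rewrite ?Ha /= ?oddM ?andbF //; lia.
    right; have R0 : Rs a (2 * m - 1) by apply: ups2; [lia| rewrite Ha oddB ?oddM //; lia].
    apply: (G_Rs_l _ _ _ R0); try lia.
    apply: (G_Rs_r _ _ _ G1); try lia.
    apply: downs2; rewrite ?oddB ?oddM //=; lia.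
  have R2 : G (E n (2 * m).+1 b).
    apply: (G_Rs_r _ _ _ G_pe); try lia.
    case: (leqP b (2 * m)) => h.
      apply: ups2; rewrite -?hp ?Ha //; lia.
    right; have R0 : Rs 1 (2 * m - 1) by apply: ups2; [lia| rewrite oddB ?oddM //; lia].
    apply: (G_Rs_l _ _ _ R0); try lia.
    apply: (G_Rs_r _ _ _ G1); try lia.
    apply: downs2; rewrite -?hp ?Ha ?oddB ?oddM //=; lia.
  apply: (G_Rs_l _ _ _ R1 R2); lia.
-
  have R1 : Rs a (2 * m).
    case: (leqP (2 * m) a) => h.
      apply: downs2; rewrite ?Ha ?oddM //=; lia.
    apply: ups2; rewrite ?Ha ?oddM //=; lia.
  have R2 : G (E n (2 * m) b).
    apply: (G_Rs_r _ _ _ G_po); try lia.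
    case: (leqP b (2 * m)) => h.
      apply: ups2; rewrite -?hp ?Ha //; lia.
    right; have R0 : Rs 0 (2 * m) by apply: ups2; [lia| rewrite oddM //].
    apply: (G_Rs_l _ _ _ R0); try lia.
    apply: (G_Rs_r _ _ _ G2); try lia.
    apply: downs2; rewrite -?hp ?Ha ?oddM //=; lia.
  apply: (G_Rs_l _ _ _ R1 R2); lia.
Qed.


Lemma gen_AM f : f \in A -> in_AM f.
Proof.
have h4 : n %% 4 = 1 by rewrite hn -addn1 mulnC modnMDl.
rewrite gen_setE inE mem_cat !inE => /orP[/eqP->|/orP[|/orP[]/eqP->]].
- exact: h_AM.
- case/mapP => i; rewrite mem_rev mem_iota n5 => hi ->; apply: xgen_AM; lia.
- apply: AM_pprod => f0 /mapP[i]; rewrite mem_iota j_even n3 => hi ->.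
  apply: xgen_AM; lia.
- apply: AM_pprod => f0 /mapP[i]; rewrite mem_iota j_odd n1 => hi ->.
  apply: xgen_AM; lia.
Qed.

Lemma G_AM f : G f -> in_AM f.
Proof.
move=> [s hs ->]; apply: AM_pprod => g gs; apply: gen_AM.
by move/allP: hs => /(_ _ gs).
Qed.

End Gen.

Section Comp.
Variable n : nat.
Implicit Types f g : pfun n.

Definition w (o : option 'I_n) (x : 'I_n) : nat := if o is Some y then x + y + 1 else 0.
Definition mu f := \sum_(x < n) w (f x) x.

Lemma sum_lt (F F' : 'I_n -> nat) i :
  (forall x, F' x <= F x) -> F' i < F i -> \sum_x F' x < \sum_x F x.
Proof.
move=> H Hi; rewrite (bigD1 i) //= [X in _ < X](bigD1 i) //= -addSn.
apply: leq_add => //; apply: leq_sum => x _; exact: H.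
Qed.

Lemma sum3E (F : 'I_n -> nat) i j k : i != j -> i != k -> j != k ->
  \sum_x F x = F i + F j + F k + \sum_(x | (x != i) && (x != j) && (x != k)) F x.
Proof.
move=> ij ik jk.
rewrite (bigD1 i) //= (bigD1 j) /=; last by rewrite eq_sym ij.
rewrite (bigD1 k) /=; last by rewrite eq_sym ik eq_sym jk.
rewrite !addnA; congr (_ + _); apply: eq_bigl => x; by rewrite andbA.
Qed.

Lemma sum3 (F F' : 'I_n -> nat) i j k : i != j -> i != k -> j != k ->
  (forall x, x != i -> x != j -> x != k -> F' x = F x) ->
  F' i + F' j + F' k < F i + F j + F k -> \sum_x F' x < \sum_x F x.
Proof.
move=> ij ik jk H Hl.
rewrite (sum3E F' ij ik jk) (sum3E F ij ik jk).
have -> : \sum_(x | (x != i) && (x != j) && (x != k)) F' x =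
          \sum_(x | (x != i) && (x != j) && (x != k)) F x.
  apply: eq_bigr => x /andP[/andP[h1 h2] h3]; exact: H.
lia.
Qed.

Lemma op_comp f g : order_preserving f -> order_preserving g -> order_preserving (pcomp f g).
Proof.
move=> Hf Hg x y a b; rewrite !pcompE.
case Ex: (f x) => [u|] //=; case Ey: (f y) => [v|] //= h1 h2 xy.
exact: (Hg u v a b h1 h2 (Hf _ _ _ _ Ex Ey xy)).
Qed.

Lemma Eaa_l f a : a < n -> (forall x : 'I_n, val x = a -> f x = None) -> pcomp (E n a a) f = f.
Proof.
move=> ha H; apply/ffunP => x; rewrite pcompE.
case: (eqVneq (val x) a) => hx; first by rewrite E_none // H.
have := Eaa x ha; rewrite (negbTE hx); case: (E n a a x) => // y [/val_inj ->] //.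
Qed.

Lemma Eaa_r f a : a < n -> (forall x y, f x = Some y -> val y != a) -> pcomp f (E n a a) = f.
Proof.
move=> ha H; apply/ffunP => x; rewrite pcompE.
case Ex: (f x) => [y|] //=; have hy := H _ _ Ex.
have := Eaa y ha; rewrite (negbTE hy); case: (E n a a y) => // z [/val_inj ->] //.
Qed.

Lemma pprodEcc (l : seq nat) : all (fun c => c < n) l -> forall x,
  omap val (pprod (map (fun c => E n c c) l) x) = if val x \in l then None else Some (val x).
Proof.
elim: l => [|c l IH] /=; first by move=> _ x; rewrite /pid ffunE.
move=> /andP[hc hl] x; rewrite pcompE inE.
case: (eqVneq (val x) c) => hx /=; first by rewrite E_none.
have := Eaa x hc; rewrite (negbTE hx); case: (E n c c x) => // y [/val_inj ->] /=.
exact: IH.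
Qed.

Lemma partial_id f : (forall o, f o = None \/ f o = Some o) ->
  f = pprod (map (fun c => E n c c) [seq val x | x <- enum (fun x => f x == None)]).
Proof.
move=> H; apply: pfunP' => x; rewrite pprodEcc; last first.
  by apply/allP => c /mapP[y _ ->]; exact: ltn_ord.
rewrite (mem_map val_inj) mem_enum.
have -> : (x \in (fun x0 : 'I_n => f x0 == None)) = (f x == None) by [].
by case: (H x) => ->.
Qed.

Lemma parity_lem (s : {perm 'I_n}) : 1 < n ->
  (forall x : 'I_n, val x < n - 2 -> s x = x) ->
  (forall x y : 'I_n, val x = n - 2 -> val y = n - 1 -> s x = y \/ s y = x) ->
  odd_perm s.
Proof.
move=> hn H1 H2.
have p1 : n - 2 < n by lia. have p2 : n - 1 < n by lia.
pose o1 := Ordinal p1; pose o2 := Ordinal p2.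
have key : s = tperm o1 o2.
  have other : forall x y : 'I_n, val x = n - 2 -> val y = n - 1 -> s x = y -> s y = x.
    move=> x y hx hy sxy; apply: val_inj.
    have hsy := ltn_ord (s y).
    case: (ltnP (s y) (n - 2)) => h.
      have := H1 (s y) h; move/perm_inj; move/(congr1 val); vnat; lia.
    case: (eqVneq (val (s y)) (n - 1)) => h'.
      have : s y = s x by rewrite sxy; apply: val_inj; rewrite h' hy.
      move/perm_inj/(congr1 val); vnat; lia.
    rewrite hx; vnat; lia.
  have other2 : forall x y : 'I_n, val x = n - 2 -> val y = n - 1 -> s y = x -> s x = y.
    move=> x y hx hy syx; apply: val_inj.
    case: (ltnP (s x) (n - 2)) => h.
      have := H1 (s x) h; move/perm_inj; move/(congr1 val); vnat; lia.
    case: (eqVneq (val (s x)) (n - 2)) => h'.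
      have : s x = s y by rewrite syx; apply: val_inj; rewrite h' hx.
      move/perm_inj/(congr1 val); vnat; lia.
    have := ltn_ord (s x); rewrite hy; vnat; lia.
  have [e1 e2] : s o1 = o2 /\ s o2 = o1.
    case: (H2 o1 o2 erefl erefl) => h.
      by split => //; apply: other.
    by split => //; apply: other2.
  apply/permP => x; apply: val_inj; rewrite tpermVal /=.
  case: eqP => hx; first by rewrite (_ : x = o1) ?e1 //; apply: val_inj.
  case: eqP => hy; first by rewrite (_ : x = o2) ?e2 //; apply: val_inj.
  have := ltn_ord x; move=> hxn; rewrite H1 //; vnat; lia.
rewrite key odd_tperm -val_eqE /=; apply/eqP; vnat; lia.
Qed.

End Comp.

Lemma stuck (P : nat -> bool) n :
  (forall g, g.+2 < n -> ~~ P g -> ~~ P g.+1 && ~~ P g.+2) ->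
  forall d x y, y = x + d -> x < y -> y < n -> ~~ P x -> P y -> x = n - 2 /\ y = n - 1.
Proof.
move=> H; elim=> [|d IH] x y e xy yn px py; first by lia.
case: (ltnP x.+2 n) => hx; last by lia.
case/andP: (H _ hx px) => p1 p2.
case: (eqVneq y x.+1) => ey; first by rewrite -ey py in p1.
have [e1 e2] := IH x.+1 y ltac:(lia) ltac:(lia) yn p1 py.
have ey2 : y = x.+2 by lia.
by rewrite -ey2 py in p2.
Qed.

Section Base.
Variable n : nat.
Implicit Types f : pfun n.

Lemma base f : 1 < n -> in_AI f -> order_preserving f ->
  (forall x y : 'I_n, x < y -> f x = None -> f y != None -> val x = n - 2 /\ val y = n - 1) ->
  (forall x y : 'I_n, x < y -> (forall o, f o != Some x) -> (exists o, f o = Some y) ->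
       val x = n - 2 /\ val y = n - 1) ->
  forall o, f o = None \/ f o = Some o.
Proof.
move=> hn [If [s [es Hs]]] Of SD SE.
pose P p := (p <= n) && [forall x : 'I_n, (x < p) ==> (f x == Some x)].
have exP : exists p, P p by exists 0; rewrite /P leq0n /=; apply/forallP.
have ubP : forall p, P p -> p <= n by move=> p /andP[].
case: (ex_maxnP exP ubP) => p /andP[pn /forallP Pp] maxp.
have pre : forall x : 'I_n, x < p -> f x = Some x.
  by move=> x hx; move: (Pp x); rewrite hx => /eqP.
case: (ltnP p n) => hp; last first.
  move=> o; right; apply: pre; have := ltn_ord o; lia.
pose op := Ordinal hp.
have nfix : f op != Some op.
  apply/negP => /eqP h; have : P p.+1.
    rewrite /P hp /=; apply/forallP => x; apply/implyP => hx.
    case: (ltnP x p) => hx'; first by rewrite pre.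
    have -> : x = op by apply: val_inj => /=; lia.
    by rewrite h.
  move/maxp; lia.
have spre : forall x : 'I_n, x < p -> s x = x.
  by move=> x hx; rewrite -(Hs _ _ (pre x hx)).
have below : forall o v, f o = Some v -> v < p -> o = v.
  by move=> o v h hv; apply: (If o v v) => //; rewrite pre.
case Eop: (f op) => [v|].
-
  exfalso.
  have vne : val v != p.
    apply/negP => /eqP e; move/negP: nfix; apply; rewrite Eop; apply/eqP; congr Some; apply: val_inj; exact: e.
  have vgt : p < v.
    case: (ltnP v p) => h; last by move: vne; case: ltngtP h => //; lia.
    have := below _ _ Eop h; move/(congr1 val) => /=; vnat; lia.
  have notim : forall o, f o != Some op.
    move=> o; apply/negP => /eqP Eo.
    case: (ltngtP (val o) p) => h.
    + have := pre o h; rewrite Eo => -[] /(congr1 val) /=; vnat; lia.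
    + have := Of _ _ _ _ Eop Eo (ltnW h) => /=; vnat; lia.
    + have eo : o = op by apply: val_inj.
      by move: Eo; rewrite eo Eop => -[e]; move: nfix; rewrite Eop e eqxx.
  have [e1 e2] := SE op v vgt notim (ex_intro _ op Eop).
  suff : odd_perm s by rewrite (negbTE es).
  apply: (@parity_lem n s hn).
    move=> x hx; apply: spre; move: e1 hx => /=; vnat; lia.
  move=> x y hx hy; left.
  have -> : x = op by apply: val_inj; rewrite hx e1.
  have -> : y = v by apply: val_inj; rewrite hy e2.
  by rewrite -(Hs _ _ Eop).
-
  case: (boolP [exists o, f o == Some op]) => [/existsP [o /eqP Eo]|nim].
    exfalso.
    case: (ltngtP (val o) p) => h.
    + have := pre o h; rewrite Eo => -[] /(congr1 val) /=; vnat; lia.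
    + have [e1 e2] := SD op o h Eop ltac:(by rewrite Eo).
      suff : odd_perm s by rewrite (negbTE es).
  apply: (@parity_lem n s hn).
        move=> x hx; apply: spre; move: e1 hx => /=; vnat; lia.
      move=> x y hx hy; right.
      have -> : x = op by apply: val_inj; rewrite hx e1.
      have -> : y = o by apply: val_inj; rewrite hy e2.
      by rewrite -(Hs _ _ Eo).
    + have eo : o = op by apply: val_inj.
      by move: Eo; rewrite eo Eop.
  have notim : forall o, f o != Some op.
    by move=> o; apply/negP => h; move/negP: nim; apply; apply/existsP; exists o.
  move=> o.
  case: (ltngtP (val o) p) => h.
  + by right; apply: pre.
  + case Eo: (f o) => [v|]; last by left.
    right.
    have [e1 e2] := SD op o h Eop ltac:(by rewrite Eo).
    congr Some; apply: val_inj.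
    case: (ltngtP (val v) p) => hv.
    * have := below _ _ Eo hv; move/(congr1 val) => /=; vnat; lia.
    * move: e1 e2 hv => /= e1 e2 hv; have := ltn_ord v; vnat; lia.
    * have ev : v = op by apply: val_inj.
      by move: (notim o); rewrite Eo ev eqxx.
  + left; have -> : o = op by apply: val_inj.
    exact: Eop.
Qed.

End Base.

Lemma E_at n a b (x y : 'I_n) : a < n -> b < n -> val x != a ->
  val y = bump b (unbump a x) -> E n a b x = Some y.
Proof.
move=> ha hb hx hy; case: (E_some ha hb hx) => z -> hz; congr Some; apply: val_inj.
by rewrite /= hz hy.
Qed.

Section Moves.
Variable n : nat.
Implicit Types f : pfun n.

Lemma Dmove f (o0 o1 o2 : 'I_n) g : val o0 = g -> val o1 = g.+1 -> val o2 = g.+2 ->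
  f o0 = None -> (f o1 != None) || (f o2 != None) ->
  mu (pcomp (E n g.+2 g) f) < mu f /\ f = pcomp (E n g g.+2) (pcomp (E n g.+2 g) f).
Proof.
move=> h0 h1 h2 f0 hf.
have hg2 : g.+2 < n by rewrite -h2 ltn_ord.
have hg1 : g.+1 < n by lia.
have hg : g < n by lia.
split; last first.
  rewrite -pcompA EE // Eaa_l // => x hx.
  by have -> : x = o0 by apply: val_inj; rewrite hx h0.
have n01 : o0 != o1 by rewrite -val_eqE h0 h1; apply/eqP; lia.
have n02 : o0 != o2 by rewrite -val_eqE h0 h2; apply/eqP; lia.
have n12 : o1 != o2 by rewrite -val_eqE h1 h2; apply/eqP; lia.
apply: (sum3 n01 n02 n12).
  move=> x x0 x1 x2; rewrite pcompE (@E_at _ _ _ x x) //=.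
    by move: x2; rewrite -val_eqE h2.
  move: x0 x1 x2; rewrite -!val_eqE h0 h1 h2 /=; vnat; rewrite /bump /unbump; lia.
rewrite !pcompE (@E_at _ _ _ o0 o1) ?h0 ?h1 //=; last by rewrite /bump /unbump; lia.
rewrite (@E_at _ _ _ o1 o2) ?h1 ?h2 //=; last by rewrite /bump /unbump; lia.
rewrite E_none ?h2 //= f0 /=.
move: hf; rewrite /w h0 h1 h2.
case: (f o1) => [y1|]; case: (f o2) => [y2|] //= _; lia.
all: apply/eqP; lia.
Qed.

Lemma Emove f (ob ob1 ob2 o : 'I_n) b : val ob = b -> val ob1 = b.+1 -> val ob2 = b.+2 ->
  (forall x, f x != Some ob) -> (f o == Some ob1) || (f o == Some ob2) ->
  mu (pcomp f (E n b b.+2)) < mu f /\ f = pcomp (pcomp f (E n b b.+2)) (E n b.+2 b).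
Proof.
move=> h0 h1 h2 nim ho.
have hb2 : b.+2 < n by rewrite -h2 ltn_ord.
have hb1 : b.+1 < n by lia.
have hb : b < n by lia.
split; last first.
  rewrite pcompA EE // Eaa_r // => x y hxy; apply/negP => /eqP e.
  have : y = ob by apply: val_inj; rewrite e h0.
  by move=> ey; move: (nim x); rewrite hxy ey eqxx.
apply: (@sum_lt _ _ _ o).
  move=> x; rewrite pcompE; case Ex: (f x) => [y|] //=.
  have hy : val y != b.
    apply/negP => /eqP e; have : y = ob by apply: val_inj; rewrite e h0.
    by move=> ey; move: (nim x); rewrite Ex ey eqxx.
  case: (E_some hb hb2 hy) => z -> hz /=; rewrite hz; vnat; rewrite /bump /unbump; lia.
rewrite pcompE; move: ho; case Eo: (f o) => [y|] //= hy.
have hyb : val y != b.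
  apply/negP => /eqP e; have : y = ob by apply: val_inj; rewrite e h0.
  by move=> ey; move: (nim o); rewrite Eo ey eqxx.
case: (E_some hb hb2 hyb) => z -> hz /=; rewrite hz.
have : val y = b.+1 \/ val y = b.+2.
  by case/orP: hy => /eqP [->]; [left|right].
vnat; rewrite /bump /unbump; lia.
Qed.

End Moves.

Section Main.
Variables n m : nat.
Hypothesis hn : n = (4 * m).+1.
Hypothesis hm : 0 < m.
Local Notation A := (gen_set n).
Local Notation G := (inG A).
Implicit Types f : pfun n.

Definition Pd f x := [exists o : 'I_n, (val o == x) && (f o != None)].
Definition Pe f x := [exists o : 'I_n, [exists o' : 'I_n, (val o' == x) && (f o == Some o')]].

Lemma PdE f (o : 'I_n) : Pd f (val o) = (f o != None).
Proof.
apply/existsP/idP => [[o' /andP[/eqP /val_inj -> //]]|h].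
by exists o; rewrite eqxx.
Qed.

Lemma PeE f (o' : 'I_n) : Pe f (val o') = [exists o, f o == Some o'].
Proof.
apply/existsP/existsP => [[o /existsP [o'' /andP[/eqP /val_inj -> h]]]|[o h]].
  by exists o.
by exists o; apply/existsP; exists o'; rewrite eqxx.
Qed.

Lemma G_cc (l : seq nat) : all (fun c => c < n) l -> G (pprod (map (fun c => E n c c) l)).
Proof.
elim: l => [|c l IH] /=; first by move=> _; exact: inG_id.
move=> /andP[hc hl]; apply: inG_comp; last exact: IH.
by apply: (EG hn hm).
Qed.

Lemma complete_op N : forall f, mu f < N -> in_AI f -> order_preserving f -> G f.
Proof.
elim: N => [//|N IH] f hmu hAI hOP.
case: (boolP [exists g : 'I_n, (g.+2 < n) && (f g == None) && (Pd f g.+1 || Pd f g.+2)]).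
  move/existsP => [g /andP[/andP[hg /eqP fg] hP]].
  have h1 : g.+1 < n by lia.
  pose o1 := Ordinal h1; pose o2 := Ordinal hg.
  have hf : (f o1 != None) || (f o2 != None) by rewrite -!PdE.
  have [hlt e] := @Dmove _ f g o1 o2 g erefl erefl erefl fg hf.
  rewrite e; apply: inG_comp; first by apply: (EG hn hm) => //=; lia.
  apply: IH; first by lia.
    by apply: AI_comp => //; case: (E_down_AM hg).
  by apply: op_comp => //; apply: E_op => //; lia.
move=> nD.
case: (boolP [exists b : 'I_n, (b.+2 < n) && [forall o, f o != Some b] && (Pe f b.+1 || Pe f b.+2)]).
  move/existsP => [b /andP[/andP[hb /forallP nim] hP]].
  have h1 : b.+1 < n by lia.
  pose o1 := Ordinal h1; pose o2 := Ordinal hb.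
  have [o ho] : exists o, (f o == Some o1) || (f o == Some o2).
    move: hP; rewrite (PeE f o1) (PeE f o2).
    by case/orP => /existsP [o ho]; exists o; rewrite ho ?orbT.
  have [hlt e] := @Emove _ f b o1 o2 o b erefl erefl erefl nim ho.
  rewrite e; apply: inG_comp; last by apply: (EG hn hm) => //=; lia.
  apply: IH; first by lia.
    have hE : G (E n b b.+2) by apply: (EG hn hm) => //=; lia.
    by apply: AI_comp => //; case: (G_AM hn hm hE).
  by apply: op_comp => //; apply: E_op => //; lia.
move=> nE.
have hn1 : 1 < n by lia.
move/existsPn: nD => nD; move/existsPn: nE => nE.
have hpid : forall o, f o = None \/ f o = Some o.
  apply: base => //.
  - move=> x y xy fx fy.
    have Hs : forall g, g.+2 < n -> ~~ Pd f g -> ~~ Pd f g.+1 && ~~ Pd f g.+2.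
      move=> g hg; have hg0 : g < n by lia.
      have := nD (Ordinal hg0); rewrite /= hg /= => h hp.
      have fg : f (Ordinal hg0) == None.
        by move: hp; rewrite -[g]/(val (Ordinal hg0)) PdE negbK.
      by move: h; rewrite fg /= negb_or.
    have := @stuck (Pd f) n Hs (y - x) x y ltac:(lia) xy (ltn_ord y).
    by rewrite !PdE fx fy /=; apply.
  - move=> x y xy nx [o fo].
    have Hs : forall g, g.+2 < n -> ~~ Pe f g -> ~~ Pe f g.+1 && ~~ Pe f g.+2.
      move=> g hg; have hg0 : g < n by lia.
      have := nE (Ordinal hg0); rewrite /= hg /= => h hp.
      have fg : [forall o, f o != Some (Ordinal hg0)].
        move: hp; rewrite -[g]/(val (Ordinal hg0)) PeE.
        by move/existsPn => H; apply/forallP.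
      by move: h; rewrite fg /= negb_or.
    have := @stuck (Pe f) n Hs (y - x) x y ltac:(lia) xy (ltn_ord y).
    rewrite !PeE; apply.
    + by apply/existsPn => o'; apply: nx.
    + by apply/existsP; exists o; rewrite fo.
rewrite (partial_id hpid); apply: G_cc.
by apply/allP => c /mapP[y _ ->]; exact: ltn_ord.
Qed.

Lemma complete f : in_AM f -> G f.
Proof.
move=> [hAI [hinj [hop|hrev]]].
  exact: (@complete_op (mu f).+1).
have h4 : n %% 4 = 1 by rewrite hn -addn1 mulnC modnMDl.
have -> : f = pcomp (pcomp f (hmap n)) (hmap n) by rewrite pcompA hh pcompf1.
apply: inG_comp; last exact: G_h.
apply: (@complete_op (mu (pcomp f (hmap n))).+1) => //.
  by apply: AI_comp => //; case: (h_AM h4).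
move=> x y a b; rewrite !pcompE.
case Ex: (f x) => [u|] //=; case Ey: (f y) => [v|] //=; rewrite !hmapE => -[<-] [<-] xy /=.
have := hrev _ _ _ _ Ex Ey xy; have := ltn_ord u; have := ltn_ord v; lia.
Qed.


Definition total f := [forall x, f x != None].

Lemma total_AM f : in_AM f -> total f -> f = pid n \/ f = hmap n.
Proof.
have hn1 : 1 < n by lia.
have h4 : n %% 4 = 1 by rewrite hn -addn1 mulnC modnMDl.
have op_id : forall g, in_AI g -> order_preserving g -> total g -> g = pid n.
  move=> g [gi [s [es Hs]]] gop /forallP gt.
  have hsome : forall x, g x = Some (s x).
    move=> x; move: (gt x); case Ex: (g x) => [y|] // _; by rewrite (Hs _ _ Ex).
  have H : forall o, g o = None \/ g o = Some o.
    apply: (@base n g hn1 _ gop).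
    - by split => //; exists s.
    - by move=> x y _ gx; move: (gt x); rewrite gx.
    - move=> x y _ nx _; exfalso; move: (nx ((s^-1)%g x)); by rewrite hsome permKV eqxx.
  apply/ffunP => x; rewrite /pid ffunE; case: (H x) => // gx.
  by move: (gt x); rewrite gx.
move=> [hAI [hinj [hop|hrev]]] ht; first by left; apply: op_id.
right.
have e : pcomp f (hmap n) = pid n.
  apply: op_id.
  - by apply: AI_comp => //; case: (h_AM h4).
  - move=> x y a b; rewrite !pcompE.
    case Ex: (f x) => [u|] //=; case Ey: (f y) => [v|] //=; rewrite !hmapE => -[<-] [<-] xy /=.
    have := hrev _ _ _ _ Ex Ey xy; have := ltn_ord u; have := ltn_ord v; lia.
  - apply/forallP => x; rewrite pcompE; move/forallP: ht => /(_ x).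
    by case: (f x) => //= y _; rewrite hmapE.
by rewrite -[f]pcompf1 -hh -pcompA e pcomp1f.
Qed.

Lemma pid_neq_h : pid n != hmap n.
Proof.
apply/negP => /eqP e; have h0 : 0 < n by lia.
have := congr1 (fun f : pfun n => f (Ordinal h0)) e; rewrite /pid ffunE hmapE => -[] e'.
move: e'; lia.
Qed.

Lemma split_total (s : seq (pfun n)) :
  (forall g, g \in s -> total g) \/
  exists t g r, [/\ s = t ++ g :: r, (forall h, h \in t -> total h) & ~~ total g].
Proof.
elim: s => [|a s IH]; first by left.
case: (boolP (total a)) => ha.
  case: IH => [H|[t [g [r [-> Ht Hg]]]]].
    by left => g; rewrite inE => /orP[/eqP->//|]; apply: H.
  right; exists (a :: t), g, r; split => // h; rewrite inE => /orP[/eqP->//|]; apply: Ht.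
by right; exists [::], a, s; split.
Qed.

Section Gens.
Variable B : {set pfun n}.
Hypothesis genB : generates B (@in_AM n).

Lemma B_AM g : g \in B -> in_AM g.
Proof. by move=> hg; apply/genB; exists [:: g]; rewrite /= ?hg ?pcompf1. Qed.

Lemma prefix_pi (t : seq (pfun n)) : (forall h, h \in t -> h \in B) -> (forall h, h \in t -> total h) ->
  pprod t = pid n \/ (pprod t = hmap n /\ hmap n \in B).
Proof.
elim: t => [|a t IH] /=; first by left.
move=> HB Ht.
have ha : a \in B by apply: HB; rewrite inE eqxx.
have IH' : pprod t = pid n \/ (pprod t = hmap n /\ hmap n \in B).
  apply: IH => h hh; [apply: HB | apply: Ht]; rewrite inE hh orbT //.
have : a = pid n \/ a = hmap n.
  by apply: total_AM; [apply: B_AM | apply: Ht; rewrite inE eqxx].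
case=> ea; rewrite ea in ha *; case: IH' => [->|[-> hB]].
- by left; rewrite pcomp1f.
- by right; rewrite pcomp1f.
- by right; rewrite pcompf1.
- by left; rewrite hh.
Qed.

Lemma prefix_perm (t : seq (pfun n)) : pprod t = pid n \/ pprod t = hmap n ->
  exists pi : 'I_n -> 'I_n, [/\ involutive pi, forall x, pprod t x = Some (pi x) &
     forall x, val (pi x) = val x \/ val (pi x) = n.-1 - val x].
Proof.
case=> ->.
  exists id; split => // x; first by rewrite /pid ffunE.
  by left.
exists (@rev_ord n); split => //; first exact: rev_ordK.
  by move=> x; rewrite hmapE.
move=> x; right; rewrite /=; have := ltn_ord x; lia.
Qed.

Lemma h_in_B : hmap n \in B.
Proof.
have h4 : n %% 4 = 1 by rewrite hn -addn1 mulnC modnMDl.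
have [s hs e] := (genB (hmap n)).1 (h_AM h4).
have HB : forall h, h \in s -> h \in B by move=> h hh; move/allP: hs => /(_ _ hh).
case: (split_total s) => [Ht|[t [g [r [es Ht Hg]]]]].
  case: (prefix_pi HB Ht) => [e'|[]//].
  by move: pid_neq_h; rewrite e e' eqxx.
have HBt : forall h, h \in t -> h \in B by move=> h hh; apply: HB; rewrite es mem_cat hh.
case: (prefix_pi HBt Ht) => [e'|[e' //]].
have [pi [piK piE _]] := prefix_perm (or_introl e').
move/forallPn: Hg => [y]; rewrite negbK => /eqP gy.
have := congr1 (fun f : pfun n => f (pi y)) e; rewrite es pprod_cat pcompE piE piK /=.
by rewrite pcompE gy hmapE.
Qed.

Lemma orbit_gen i : i < n -> exists2 g, g \in B &
  exists c : 'I_n, (val c = i \/ val c = n.-1 - i) /\ forall y, (g y == None) = (y == c).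
Proof.
move=> hi.
have hE : in_AM (E n i i) by apply: (G_AM hn hm); apply: (EG hn hm).
have [s hs e] := (genB (E n i i)).1 hE.
have HB : forall h, h \in s -> h \in B by move=> h hh; move/allP: hs => /(_ _ hh).
have Eii : forall x, (E n i i x == None) = (val x == i).
  move=> x; have := Eaa x hi; case: (E n i i x) => [y|] /=; case: eqP => //.
case: (split_total s) => [Ht|[t [g [r [es Ht Hg]]]]].
  have [pi [piK piE _]] := prefix_perm (match prefix_pi HB Ht with
     | or_introl h => or_introl h | or_intror (conj h _) => or_intror h end).
  exfalso; pose oi := Ordinal hi.
  have := Eii oi; rewrite e piE eqxx //.
have HBt : forall h, h \in t -> h \in B by move=> h hh; apply: HB; rewrite es mem_cat hh.
have [pi [piK piE piV]] := prefix_perm (match prefix_pi HBt Ht with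
     | or_introl h => or_introl h | or_intror (conj h _) => or_intror h end).
have key : forall x, g (pi x) = None -> val x = i.
  move=> x gx; apply/eqP; rewrite -Eii e es pprod_cat pcompE piE /= pcompE gx //.
exists g; first by apply: HB; rewrite es mem_cat inE eqxx orbT.
move/forallPn: Hg => [y0]; rewrite negbK => /eqP gy0.
exists y0; split.
  have := key (pi y0); rewrite piK => /(_ gy0) hx0.
  case: (piV (pi y0)); rewrite piK hx0; [left|right] => //.
move=> y; apply/eqP/eqP => [gy|->//].
have h1 := key _ (eq_ind_r (fun z => g z = None) gy (piK y)).
have h2 := key _ (eq_ind_r (fun z => g z = None) gy0 (piK y0)).
by rewrite -(piK y) -(piK y0); congr pi; apply: val_inj; rewrite h1 h2.
Qed.

Definition orb (g : pfun n) : 'I_(2 * m).+1 :=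
  inord (let c := odflt 0 (omap val [pick x | g x == None]) in minn c (4 * m - c)).

Lemma B_card : (2 * m).+2 <= #|B|.
Proof.
rewrite (cardsD1 (hmap n)) h_in_B add1n ltnS.
have <- : #|[set: 'I_(2 * m).+1]| = (2 * m).+1 by rewrite cardsT card_ord.
apply: (leq_trans _ (leq_imset_card orb _)); apply: subset_leq_card.
apply/subsetP => i _.
have hi : i < n by have := ltn_ord i; lia.
have [g gB [c [hc hg]]] := orbit_gen hi.
apply/imsetP; exists g.
  rewrite !inE gB andbT; apply/eqP => gh.
  by move: (hg c); rewrite eqxx gh hmapE.
apply: val_inj; rewrite /orb.
case: pickP => [x /eqP gx|H]; last by move: (H c); rewrite hg eqxx.
have : x = c by apply/eqP; rewrite -hg gx.
move=> ->; rewrite /= inordK; last by have := ltn_ord i; have := ltn_ord c; case: hc; vnat; lia.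
have := ltn_ord i; case: hc; vnat; lia.
Qed.

End Gens.

End Main.

Section Card.
Variables n m : nat.
Hypothesis hn : n = (4 * m).+1.
Hypothesis hm : 0 < m.

Definition kv (f : pfun n) := omap val [pick x | f x == None].

Lemma kv_E a b : a < n -> b < n -> kv (E n a b) = Some a.
Proof.
move=> ha hb; rewrite /kv; case: pickP => [x /eqP hx|H].
  by have := EvalE x ha hb; rewrite hx; case: eqP => //= ->.
by move: (H (Ordinal ha)); rewrite E_none.
Qed.

Lemma kv_h : kv (hmap n) = None.
Proof. by rewrite /kv; case: pickP => [x|//]; rewrite hmapE. Qed.

Lemma card_gen : #|gen_set n| = (2 * m).+2.
Proof.
rewrite /gen_set cardsE.
set l := rev (iota (n + 5)./2 (n - (n + 5)./2).+1).
have hl : forall i, i \in l -> 2 * m + 3 <= i <= n.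
  by move=> i; rewrite mem_rev mem_iota (n5 hn); lia.
set L := _ :: _.
have uL : uniq L.
  apply: (@map_uniq _ _ kv).
  have -> : map kv L = None :: map Some (map predn l ++ [:: (2 * m).+1; 2 * m]).
    rewrite /L /= map_cat /= (prod_evenE hn hm) (prod_oddE hn hm) kv_h !kv_E; try lia.
    rewrite map_cat -map_comp; congr (_ :: _ ++ _).
    rewrite -map_comp; apply/eq_in_map => i /hl hi /=; rewrite xgenE ?kv_E //; lia.
  rewrite /= (map_inj_uniq (@Some_inj _)) cat_uniq.
  apply/andP; split; first by apply/mapP => -[].
  apply/and3P; split.
  - rewrite map_inj_in_uniq ?rev_uniq ?iota_uniq // => x y /hl hx /hl hy /=; lia.
  - apply/hasPn => x; rewrite !inE => /orP[]/eqP -> ; apply/mapP => -[y /hl hy] /=; lia.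
  - rewrite /= inE andbT; apply/eqP; lia.
have /card_uniqP -> := uL.
rewrite /L /= size_cat /= size_map size_rev size_iota (n5 hn); lia.
Qed.

End Card.

Theorem theorem5p5 (n : nat) (hn : n %% 4 = 1) (hn1 : 1 < n) :
  generates (gen_set n) (@in_AM n) /\
  (forall A : {set pfun n}, generates A (@in_AM n) -> #|gen_set n| <= #|A|) /\
  #|gen_set n| = (n + 1)./2 + 1 /\
  has_rank (@in_AM n) ((n + 1)./2 + 1).
Proof.
set m := n %/ 4.
have hnm : n = (4 * m).+1 by rewrite {1}(divn_eq n 4) hn; lia.
have hm : 0 < m by lia.
have gen : generates (gen_set n) (@in_AM n).
  move=> f; split; first exact: (complete hnm hm).
  exact: (G_AM hnm hm).
have low : forall A : {set pfun n}, generates A (@in_AM n) -> #|gen_set n| <= #|A|.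
  by move=> A hA; rewrite (card_gen hnm hm); apply: (B_card hnm hm hA).
have cg : #|gen_set n| = (n + 1)./2 + 1 by rewrite (card_gen hnm hm) (n1 hnm); lia.
split => //; split => //; split => //.
split; first by exists (gen_set n).
by move=> A hA; rewrite -cg; apply: low.
Qed.
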